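(* Let $d\ge 2$ and $L\in\mathbb{N}$, and let $$P(\mathbf{x})=\prod_{j=1}^d\left[\sin^{2L}(\pi x_j/2)\sum_{k_j=0}^{L-1}\binom{2L-1}{k_j}\sin^{2(L-1-k_j)}(\pi x_j/2)\cos^{2k_j}(\pi x_j/2)\right],\qquad\mathbf{x}\in\mathbb{R}^d.$$ Then $P\chi_{[0,2]^d}$ satisfies the partition of unity condition $$\sum_{\mathbf{n}\in\mathbb{Z}^d}P(\mathbf{x}+\mathbf{n})\chi_{[0,2]^d}(\mathbf{x}+\mathbf{n})=1\quad\text{for all }\mathbf{x}\in\mathbb{R}^d,$$ and $P\chi_{[0,2]^d}\in C^{2L-1}(\mathbb{R}^d)$.
   Context: $\chi_{[0,2]^d}$ is the indicator function of $[0,2]^d$. $C^{m}(\mathbb{R}^d)$ denotes functions with continuous partial derivatives of all total orders at most $m$. *)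

(* Defs.v *)
From HB Require Import structures.
From mathcomp Require Import all_boot all_order all_algebra.
From mathcomp Require Import all_classical all_reals all_analysis.
Set Implicit Arguments. Unset Strict Implicit. Unset Printing Implicit Defensive.
Import Order.TTheory GRing.Theory Num.Theory.
Import numFieldNormedType.Exports.
Local Open Scope ring_scope.

Definition Pfun (R : realType) (d L : nat) (x : 'rV[R]_d) : R :=
  \prod_(j < d)
    ((sin (pi * x ord0 j / 2)) ^+ (2 * L) *
     \sum_(k < L) ('C(2 * L - 1, k))%:R *
        (sin (pi * x ord0 j / 2)) ^+ (2 * (L - 1 - k)) *
        (cos (pi * x ord0 j / 2)) ^+ (2 * k)).

Definition chi02 (R : realType) (d : nat) (x : 'rV[R]_d) : R :=
  if [forall j : 'I_d, (0 <= x ord0 j <= 2)] then 1 else 0.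

Definition Pchi (R : realType) (d L : nat) (x : 'rV[R]_d) : R :=
  Pfun L x * chi02 x.

Definition basis_vec (R : realType) (d : nat) (j : 'I_d) : 'rV[R]_d :=
  delta_mx ord0 j.

Fixpoint Cm (R : realType) (d : nat) (m : nat) (f : 'rV[R]_d -> R) : Prop :=
  match m with
  | 0 => continuous f
  | m'.+1 => continuous f /\
      forall j : 'I_d,
        (forall x, derivable f x (basis_vec R j)) /\
        Cm m' ('D_(basis_vec R j) f)
  end.

(* Main.v *)
Require Import Defs.
From HB Require Import structures.
From mathcomp Require Import all_boot all_order all_algebra.
From mathcomp Require Import all_classical all_reals all_analysis.
From mathcomp Require Import ring lra zify.
Import Order.TTheory GRing.Theory Num.Theory.
Import numFieldNormedType.Exports.
Local Open Scope classical_set_scope.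
Local Open Scope ring_scope.
Set Implicit Arguments. Unset Strict Implicit. Unset Printing Implicit Defensive.
Lemma binom_split (R : comPzRingType) (s c : R) (L : nat) : (1 <= L)%N ->
  s ^+ L * \sum_(k < L) ('C(2 * L - 1, k))%:R * s ^+ (L - 1 - k) * c ^+ k +
  c ^+ L * \sum_(k < L) ('C(2 * L - 1, k))%:R * c ^+ (L - 1 - k) * s ^+ k
  = (s + c) ^+ (2 * L - 1).
Proof.
move=> L1; rewrite exprDn.
rewrite (_ : (2 * L - 1).+1 = L + L); last by lia.
rewrite big_split_ord /=.
rewrite [X in _ = _ + X](reindex_inj rev_ord_inj) /=.
rewrite !mulr_sumr; congr (_ + _); apply: eq_bigr => i _.
  have hi := ltn_ord i.
  rewrite (_ : 2 * L - 1 - i = L + (L - 1 - i))%N; last by lia.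
  by rewrite exprD -mulr_natr; ring.
have hi := ltn_ord i.
rewrite (_ : (2 * L - 1 - (L + (L - i.+1))) = i)%N; last by lia.
rewrite (_ : (L + (L - i.+1)) = (2 * L - 1) - i)%N; last by lia.
rewrite bin_sub; last by lia.
rewrite (_ : (2 * L - 1 - i) = L + (L - 1 - i))%N; last by lia.
by rewrite exprD -mulr_natr; ring.
Qed.

Section Cut.
Variable R : realType.

Definition cutf (phi : R -> R) (t : R) : R :=
  if (0 <= t) && (t <= 2) then phi t else 0.

Lemma cutf_near (phi : R -> R) (t : R) : t != 0 -> t != 2 ->
  \forall y \near t, cutf phi y = (if (0 <= t) && (t <= 2) then phi y else 0).
Proof.
move=> t0 t2.
have [tlt0|] := boolP (t < 0).
  near=> y; rewrite /cutf.
  have : y < 0 by near: y; exact: lt_nbhsl.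
  move=> y0; have := tlt0; rewrite ltNge => /negbTE ->.
  by move: y0; rewrite ltNge => /negbTE ->.
rewrite -leNgt => tge0.
have [tgt2|] := boolP (2 < t).
  near=> y; rewrite /cutf.
  have : 2 < y by near: y; exact: lt_nbhsr.
  move=> y2; have := tgt2; rewrite ltNge => /negbTE ->.
  by move: y2; rewrite ltNge => /negbTE ->; rewrite !andbF.
rewrite -leNgt => tle2.
have t0' : 0 < t by rewrite lt_neqAle eq_sym t0.
have t2' : t < 2 by rewrite lt_neqAle t2.
rewrite tge0 tle2 /=.
near=> y; rewrite /cutf.
have -> : 0 <= y by apply/ltW; near: y; exact: lt_nbhsr.
have -> : y <= 2 by apply/ltW; near: y; exact: lt_nbhsl.
by [].
Unshelve. all: by end_near. Qed.

Lemma cutf_cont (phi : R -> R) : continuous phi -> phi 0 = 0 -> phi 2 = 0 ->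
  continuous (cutf phi).
Proof.
move=> cphi p0 p2 t.
have [->|t0] := eqVneq t 0.
  apply/cvgrPdist_lt => e e0.
  have := cphi 0; move/cvgrPdist_lt => /(_ e e0).
  apply: filterS => y; rewrite /cutf lexx ler0n /= p0 !sub0r !normrN.
  by case: ifP => // _ _; rewrite normr0.
have [->|t2] := eqVneq t 2.
  apply/cvgrPdist_lt => e e0.
  have := cphi 2; move/cvgrPdist_lt => /(_ e e0).
  apply: filterS => y; rewrite /cutf lexx ler0n /= p2 !sub0r !normrN.
  by case: ifP => // _ _; rewrite normr0.
have hn := cutf_near phi t0 t2.
have hn' : \forall y \near t, (if (0 <= t) && (t <= 2) then phi y else 0) = cutf phi y.
  by apply: filterS hn => y ->.
apply: cvg_trans (near_eq_cvg hn') _.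
have -> : cutf phi t = (if (0 <= t) && (t <= 2) then phi t else 0) by [].
case: ifP => _; first exact: cphi.
exact: cvg_cst.
Qed.


Lemma cutf_derive_bd (phi : R -> R) t : derivable phi t 1 -> phi t = 0 ->
  (derive1 phi) t = 0 -> cutf phi t = 0 -> is_derive t 1 (cutf phi) 0.
Proof.
move=> dphi pt dpt ct.
have hp := dphi; rewrite /derivable in hp.
have eD : 'D_1 phi t = 0 by rewrite -derive1E.
rewrite /derive in eD; rewrite eD in hp.
have hq : (fun h => h^-1 *: ((cutf phi \o shift t) (h *: 1) - cutf phi t)) @ 0^' --> (0:R).
  apply/cvgr0Pnorm_lt => e e0.
  move/cvgr0Pnorm_lt: hp => /(_ e e0).
  apply: filterS => h /=; rewrite ct pt /cutf.
  by case: ifP => // _ _; rewrite subr0 scaler0 normr0.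
apply: DeriveDef; first exact: cvgP hq.
by rewrite /derive; exact: cvg_lim hq.
Qed.

Lemma cutf_derive (phi : R -> R) : (forall t : R, derivable phi t 1) ->
  phi 0 = 0 -> phi 2 = 0 -> (derive1 phi) 0 = 0 -> (derive1 phi) 2 = 0 ->
  forall t : R, is_derive t 1 (cutf phi) (cutf (derive1 phi) t).
Proof.
move=> dphi p0 p2 d0 d2 t.
have [->|t0] := eqVneq t 0.
  rewrite /cutf lexx ler0n /= d0.
  by apply: cutf_derive_bd => //; rewrite /cutf lexx ler0n.
have [->|t2] := eqVneq t 2.
  rewrite /cutf lexx ler0n /= d2.
  by apply: cutf_derive_bd => //; rewrite /cutf lexx ler0n.
have hn := cutf_near phi t0 t2.
have hn' : \forall y \near t, (if (0 <= t) && (t <= 2) then phi y else 0) = cutf phi y.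
  by apply: filterS hn => y ->.
apply: (near_eq_is_derive hn').
rewrite /cutf; case: ifP => _.
  by rewrite derive1E; exact: derivableP.
exact: is_derive_cst.
Qed.


Definition sn (t : R) := sin (pi * t / 2).
Definition cs (t : R) := cos (pi * t / 2).

Lemma is_derive_arg (t : R) : is_derive t 1 (fun u : R => pi * u / 2) (pi / 2).
Proof.
rewrite (_ : (fun u : R => pi * u / 2) = (pi / 2) \*: (@id R)); last first.
  by apply/funext => u /=; rewrite mulrAC.
have h := is_deriveZ (pi/2) (is_derive_id t 1).
by apply: (is_derive_eq h); rewrite [_%:A]mulr1.
Qed.

Lemma is_derive_sn (t : R) : is_derive t 1 sn (cs t * (pi / 2)).
Proof.
rewrite (_ : sn = sin \o (fun u : R => pi * u / 2)) //.
exact: is_derive1_comp (is_derive_sin _) (is_derive_arg t).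
Qed.

Lemma is_derive_cs (t : R) : is_derive t 1 cs (- sn t * (pi / 2)).
Proof.
rewrite (_ : cs = cos \o (fun u : R => pi * u / 2)) //.
exact: is_derive1_comp (is_derive_cos _) (is_derive_arg t).
Qed.


Definition mon (c : R) (a b : nat) (t : R) := c * sn t ^+ a * cs t ^+ b.

Lemma is_derive_mon c a b (t : R) : is_derive t 1 (mon c a b)
  (mon (c * a%:R * (pi / 2)) a.-1 b.+1 t + mon (- (c * b%:R * (pi / 2))) a.+1 b.-1 t).
Proof.
have h1 := is_deriveX a (is_derive_sn t).
have h2 := is_deriveM (is_derive_cst c t 1) h1.
have h3 := is_deriveM h2 (is_deriveX b (is_derive_cs t)).
rewrite (_ : mon c a b = (cst c * sn ^+ a) * cs ^+ b); last first.
  by apply/funext => u; rewrite /mon /= !exprfctE.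
apply: (is_derive_eq h3).
rewrite /mon /= !exprfctE.
change ((cst c * (fun x => sn x ^+ a)) t) with (c * sn t ^+ a).
rewrite /GRing.scale /=.
clear h1 h2 h3; move: (sn t) (cs t) => S C.
case: a => [|a]; case: b => [|b]; rewrite /= ?exprS; ring.
Qed.


Inductive Scl (k : nat) : (R -> R) -> Prop :=
| Scl_mon (c : R) (a b : nat) : (k <= a)%N -> Scl k (mon c a b)
| Scl_add f g : Scl k f -> Scl k g -> Scl k (fun t => f t + g t).

Lemma Scl_ext k f g : Scl k f -> f =1 g -> Scl k g.
Proof. by move=> Sf /funext <-. Qed.

Lemma Scl_deriv k f : Scl k f -> (forall t : R, derivable f t 1) /\ Scl k.-1 (derive1 f).
Proof.
elim=> {f} [c a b ka|f g Sf [df Sf'] Sg [dg Sg']].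
  split; first by move=> t; case: (is_derive_mon c a b t).
  apply: (Scl_ext (Scl_add (@Scl_mon k.-1 (c * a%:R * (pi / 2)) a.-1 b.+1 _)
                       (@Scl_mon k.-1 (- (c * b%:R * (pi / 2))) a.+1 b.-1 _))).
  - by move: ka; case: k; case: a => //= *; lia.
  - by move: ka; case: k; case: a => //= *; lia.
  move=> t; rewrite derive1E.
  by case: (is_derive_mon c a b t) => _ ->.
have dfg : forall t : R, derivable (fun t => f t + g t) t 1.
  by move=> t; exact: (derivableD (df t) (dg t)).
split => //.
apply: (Scl_ext (Scl_add Sf' Sg')) => t.
rewrite derive1E !derive1E.
exact: (esym (deriveD (df t) (dg t))).
Qed.

Lemma Scl_zero k f : Scl k.+1 f -> f 0 = 0 /\ f 2 = 0.
Proof.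
elim=> {f} [c a b ka|f g _ [f0 f2] _ [g0 g2]]; last by rewrite f0 f2 g0 g2 addr0.
rewrite /mon /sn mulr0 mul0r sin0 (_ : pi * 2 / 2 = pi) ?sinpi; last first.
  by rewrite mulfK // pnatr_eq0.
by case: a ka => // a _; rewrite !expr0n /= !mulr0 !mul0r.
Qed.

Fixpoint C1 (m : nat) (h : R -> R) : Prop :=
  match m with
  | 0 => continuous h
  | m'.+1 => continuous h /\ (forall x : R, derivable h x 1) /\ C1 m' (derive1 h)
  end.

Lemma Scl_cont k f : Scl k f -> continuous f.
Proof.
move=> /Scl_deriv [df _] t.
by apply: differentiable_continuous; rewrite -derivable1_diffP.
Qed.

Lemma Scl_C1 m : forall k f, Scl k f -> (m < k)%N -> C1 m (cutf f).
Proof.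
elim: m => [|m IH] k f Sf mk.
  case: k Sf mk => // k Sf _ /=.
  have [f0 f2] := Scl_zero Sf.
  exact: cutf_cont (Scl_cont Sf) f0 f2.
case: k Sf mk => // k Sf mk.
have [f0 f2] := Scl_zero Sf.
have [df Sf'] := Scl_deriv Sf.
case: k Sf Sf' mk => // k Sf Sf' mk.
have [d0 d2] := Scl_zero Sf'.
have hd := cutf_derive df f0 f2 d0 d2.
split; first exact: cutf_cont (Scl_cont Sf) f0 f2.
split; first by move=> t; case: (hd t).
rewrite (_ : derive1 (cutf f) = cutf (derive1 f)); last first.
  by apply/funext => t; rewrite derive1E; case: (hd t) => _ ->.
exact: IH Sf' _.
Qed.


Definition F1 (L : nat) (t : R) : R :=
  sin (pi * t / 2) ^+ (2 * L) *
     \sum_(k < L) ('C(2 * L - 1, k))%:R *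
        (sin (pi * t / 2)) ^+ (2 * (L - 1 - k)) *
        (cos (pi * t / 2)) ^+ (2 * k).

Lemma S0 k : Scl k (fun _ => 0).
Proof. by apply: (Scl_ext (Scl_mon 0 0 (leqnn k))) => t; rewrite /mon !mul0r. Qed.

Lemma Scl_sum k n (F : nat -> R -> R) : (forall i, (i < n)%N -> Scl k (F i)) ->
  Scl k (fun t => \sum_(i < n) F i t).
Proof.
elim: n => [|n IH] HF.
  by apply: (Scl_ext (S0 k)) => t; rewrite big_ord0.
apply: (Scl_ext (Scl_add (IH (fun i hi => HF i (ltnW hi))) (HF n (ltnSn n)))) => t.
by rewrite big_ord_recr.
Qed.

Lemma F1_S L : Scl (2 * L) (F1 L).
Proof.
apply: (Scl_ext (@Scl_sum (2 * L) L (fun i => mon ('C(2 * L - 1, i))%:R (2 * L + 2 * (L - 1 - i)) (2 * i)) _)).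
  by move=> i _; apply: Scl_mon; exact: leq_addr.
move=> t; rewrite /F1 mulr_sumr; apply: eq_bigr => i _.
by rewrite /mon /sn /cs exprD; ring.
Qed.

Lemma F1_ge0 L t : 0 <= F1 L t.
Proof.
rewrite /F1; apply: mulr_ge0; first by rewrite exprM; apply: exprn_ge0; exact: sqr_ge0.
apply: sumr_ge0 => i _; apply: mulr_ge0; first apply: mulr_ge0 => //.
  by rewrite exprM; apply: exprn_ge0; exact: sqr_ge0.
by rewrite exprM; apply: exprn_ge0; exact: sqr_ge0.
Qed.

Lemma F1_sum L t : (1 <= L)%N -> F1 L t + F1 L (t + 1) = 1.
Proof.
move=> L1; rewrite /F1.
have -> : pi * (t + 1) / 2 = pi * t / 2 + pi / 2 by rewrite mulrDr mulr1 mulrDl.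
rewrite sinDpihalf cosDpihalf.
set u := pi * t / 2.
have sc : sin u ^+ 2 + cos u ^+ 2 = 1 by rewrite sin2cos2 subrK.
transitivity ((sin u ^+ 2 + cos u ^+ 2) ^+ (2 * L - 1)); last by rewrite sc expr1n.
rewrite -binom_split // !exprM.
congr (_ + _); congr (_ * _); apply: eq_bigr => i _; by rewrite !exprM ?sqrrN.
Qed.

End Cut.
Section Multi.
Variables (R : realType) (d : nat).

Lemma C1_S m (h : R -> R) : C1 m.+1 h -> C1 m h.
Proof.
elim: m h => [|m IH] h /= [c [dh Ch]]; first done.
by split => //; split => //; exact: IH.
Qed.

Lemma cont_prod_gen n (G : 'I_n -> 'rV[R]_d -> R) : (forall j, continuous (G j)) ->
  continuous (fun x => \prod_(j < n) G j x).
Proof.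
elim: n G => [|n IH] G HG.
  rewrite (_ : (fun x => _) = cst 1); first exact: cst_continuous.
  by apply/funext => x; rewrite big_ord0.
rewrite (_ : (fun x => _) = (fun x => \prod_(j < n) G (widen_ord (leqnSn n) j) x) \* G ord_max).
  by move=> x; apply: continuousM; [exact: (IH _ (fun j => HG _) x)|exact: HG].
by apply/funext => x; rewrite big_ord_recr.
Qed.

Lemma cont_prod (h : 'I_d -> R -> R) : (forall j, continuous (h j)) ->
  continuous (fun x : 'rV[R]_d => \prod_j h j (x ord0 j)).
Proof.
move=> Hh; apply: cont_prod_gen => j x.
apply: continuous_comp; first exact: coord_continuous.
exact: Hh.
Qed.


Lemma prod_is_derive (h : 'I_d -> R -> R) (j : 'I_d) (x : 'rV[R]_d) :
  derivable (h j) (x ord0 j) 1 ->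
  is_derive x (basis_vec R j) (fun y : 'rV[R]_d => \prod_i h i (y ord0 i))
    (\prod_i (if i == j then derive1 (h j) else h i) (x ord0 i)).
Proof.
move=> dh.
set C := \prod_(i | i != j) h i (x ord0 i).
have key : forall t : R,
    \prod_i h i ((t *: basis_vec R j + x) ord0 i) = h j (t + x ord0 j) * C.
  move=> t; rewrite (bigD1 j) //=; congr (_ * _).
    by rewrite !mxE !eqxx /= mulr1.
  by rewrite /C; apply: eq_bigr => i ij; rewrite !mxE (negbTE ij) /= mulr0 add0r.
have key0 : \prod_i h i (x ord0 i) = h j (x ord0 j) * C.
  by rewrite (bigD1 j).
have hp := dh; rewrite /derivable in hp.
have eqq : (fun t : R => t^-1 *: (((fun y : 'rV[R]_d => \prod_i h i (y ord0 i)) \o shift x)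
              (t *: basis_vec R j) - \prod_i h i (x ord0 i))) =
           (fun t : R => C * (t^-1 *: ((h j \o shift (x ord0 j)) (t *: 1) - h j (x ord0 j)))).
  apply/funext => t /=; rewrite key key0 /GRing.scale /= mulr1; ring.
have hq := @cvgMl_tmp _ _ _ _ _ C _ hp.
apply: DeriveDef.
  by rewrite /derivable eqq; apply/cvg_ex; eexists; exact: hq.
have -> : \prod_i (if i == j then derive1 (h j) else h i) (x ord0 i) =
    C * lim ((fun t : R => t^-1 *: ((h j \o shift (x ord0 j)) (t *: 1) - h j (x ord0 j))) @ 0^').
  rewrite (bigD1 j) //= eqxx derive1E /C mulrC; congr (_ * _).
  by apply: eq_bigr => i ij; rewrite (negbTE ij).
rewrite -eqq in hq.
rewrite /derive; apply: cvg_lim => //; apply: hq; exact: _.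

Qed.


Lemma prod_Cm m : forall h : 'I_d -> R -> R, (forall j, C1 m (h j)) ->
  Cm m (fun x : 'rV[R]_d => \prod_i h i (x ord0 i)).
Proof.
elim: m => [|m IH] h Hh.
  exact: cont_prod.
split; first by apply: cont_prod => j; case: (Hh j).
move=> j; have [_ [dh Ch]] := Hh j.
split; first by move=> x; case: (prod_is_derive (dh (x ord0 j))).
rewrite (_ : 'D_(basis_vec R j) _ =
  fun x : 'rV[R]_d => \prod_i (if i == j then derive1 (h j) else h i) (x ord0 i)).
  apply: (IH (fun i => if i == j then derive1 (h j) else h i)) => i /=.
  case: eqP => [_|_]; first exact: Ch.
  exact: C1_S (Hh i).
by apply/funext => x; case: (prod_is_derive (dh (x ord0 j))).
Qed.

Lemma Pchi_prod L : @Pchi R d L = fun x => \prod_i cutf (F1 L) (x ord0 i).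
Proof.
apply/funext => x; rewrite /Pchi /chi02 /Pfun.
case: (boolP [forall j : 'I_d, (0 <= x ord0 j <= 2)]) => H.
  rewrite mulr1; apply: eq_bigr => i _.
  by rewrite /cutf (forallP H i).
rewrite mulr0; move/forallPn: H => [i Hi].
by rewrite (bigD1 i) //= /cutf (negbTE Hi) mul0r.
Qed.

Lemma Pchi_Cm L : (1 <= L)%N -> Cm (2 * L - 1) (@Pchi R d L).
Proof.
move=> L1; rewrite Pchi_prod; apply: (@prod_Cm (2 * L - 1) (fun _ => cutf (F1 L))) => j.
apply: (Scl_C1 (F1_S R L)); lia.
Qed.

End Multi.
Section Part.
Variables (R : realType) (d L : nat).
Hypothesis L1 : (1 <= L)%N.

Lemma g_ge0 (t : R) : 0 <= cutf (F1 L) t.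
Proof. by rewrite /cutf; case: ifP => // _; exact: F1_ge0. Qed.

Lemma F1_02 : F1 L (0 : R) = 0 /\ F1 L (2 : R) = 0.
Proof.
apply: (Scl_zero (k := 2 * L - 1)); rewrite (_ : (2 * L - 1).+1 = 2 * L); last by lia.
exact: F1_S.
Qed.

Lemma g_sum3 (y : R) : 0 <= y -> y < 1 ->
  \sum_(i < 3) cutf (F1 L) (y + (i : nat)%:R) = 1.
Proof.
move=> y0 y1; rewrite !big_ord_recr big_ord0 /= add0r addr0.
rewrite [X in _ + X](_ : _ = 0); last first.
  rewrite /cutf; case: ifP => // /andP [_ h2].
  have -> : y = 0 by lra.
  by rewrite add0r (proj2 F1_02).
rewrite addr0 /cutf.
rewrite ifT; last by apply/andP; split; lra.
rewrite ifT; last by apply/andP; split; lra.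
exact: F1_sum.
Qed.


Lemma Pchi_shift (x : 'rV[R]_d) (n : 'rV[int]_d) :
  @Pchi R d L (x + map_mx intr n) = \prod_i cutf (F1 L) (x ord0 i + (n ord0 i)%:~R).
Proof. by rewrite Pchi_prod; apply: eq_bigr => i _; rewrite !mxE. Qed.

Lemma partition (x : 'rV[R]_d) :
  (\esum_(n in [set: 'rV[int]_d]) (@Pchi R d L (x + map_mx intr n))%:E)%E = 1%E.
Proof.
pose b (i : 'I_d) : int := - Num.floor (x ord0 i).
pose e (f : {ffun 'I_d -> 'I_3}) : 'rV[int]_d := \row_j (b j + ((f j : nat))%:Z).
have a0 : forall n, (0 <= (@Pchi R d L (x + map_mx intr n))%:E)%E.
  by move=> n; rewrite lee_fin Pchi_shift; apply: prodr_ge0 => i _; exact: g_ge0.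
have step1 : (\esum_(n in [set: 'rV[int]_d]) (@Pchi R d L (x + map_mx intr n))%:E)%E =
    (\esum_(n in range e) (@Pchi R d L (x + map_mx intr n))%:E)%E.
  rewrite [RHS]esum_mkcond; apply: eq_esum => n _.
  case: ifP => // nA.
  case: (boolP [forall i, (0 <= x ord0 i + (n ord0 i)%:~R <= 2)]) => H; last first.
    move/forallPn: H => [i Hi].
    by rewrite Pchi_shift (bigD1 i) //= /cutf (negbTE Hi) mul0r.
  suff : n \in range e by rewrite nA.
  rewrite inE.
  exists [ffun i => inord `|n ord0 i - b i|%N] => //.
  apply/rowP => i; rewrite !mxE ffunE.
  move/forallP: H => /(_ i) /andP [h0 h2].
  have hf1 := floorD1_gt (x ord0 i).
  have hf0 := floor_le (x ord0 i).
  have k0 : (-1 < n ord0 i - b i)%R.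
    rewrite -(ltr_int R) /b opprK intrD; rewrite intrD in hf1; lra.
  have k2 : (n ord0 i - b i <= 2)%R.
    rewrite -(ler_int R) /b opprK intrD; lra.
  rewrite inordK; last by lia.
  move: k0 k2; move: (b i) (n ord0 i) => B N; lia.
rewrite step1 esum_image; last first.
  move=> f f' _ _ /rowP H; apply/ffunP => i; move: (H i); rewrite !mxE.
  move/addrI => /eqP; rewrite eqz_nat => /eqP; exact: ord_inj.
rewrite (@esum_fset R _ [set: {ffun 'I_d -> 'I_3}] (fun f => (@Pchi R d L (x + map_mx intr (e f)))%:E)); [|exact: finite_finset|by move=> *; exact: a0].
rewrite (fsbigE (enum {ffun 'I_d -> 'I_3})); first last.
- by move=> f _; rewrite mem_enum.
- by [].
- exact: enum_uniq.
rewrite sumEFin; congr EFin.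
rewrite (eq_bigl xpredT); last by move=> i; rewrite in_setT.
rewrite big_enum /=.
under eq_bigr do rewrite Pchi_shift.
transitivity (\prod_(i < d) \sum_(k < 3) cutf (F1 L) (x ord0 i + (b i + ((k : nat))%:Z)%:~R)).
  rewrite bigA_distr_bigA; apply: eq_big => // f _.
  by apply: eq_bigr => i _; rewrite /e mxE.
apply: big1 => i _.
have hf1 := floorD1_gt (x ord0 i).
have hf0 := floor_le (x ord0 i).
rewrite -[RHS](g_sum3 (y := x ord0 i + (b i)%:~R)); last 2 first.
- by rewrite /b intrN; lra.
- by rewrite /b intrN; rewrite intrD in hf1; lra.
by apply: eq_bigr => k _; rewrite intrD addrA.
Qed.

End Part.

Unset Implicit Arguments. Set Strict Implicit.

Theorem corollary3p4 (R : realType) (d L : nat) :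
  (2 <= d)%N -> (1 <= L)%N ->
  (forall x : 'rV[R]_d,
     (\esum_(n in [set: 'rV[int]_d]) (Pchi L (x + map_mx intr n))%:E)%E
       = 1%E) /\
  Cm (2 * L - 1) (@Pchi R d L).
Proof.
move=> _ L1; split.
  by move=> x; exact: partition.
exact: Pchi_Cm.
Qed.
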